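(* Let $k$ be a field, $G$ an ordered abelian group, and $\mathcal{M}$ the valuation ideal of the power series field $k((G))$ with its canonical valuation. Let $f(X)=\sum_{i\ge1}c_iX^i\in k[[X]]$ with $c_1\neq0$, and let $f:\mathcal{M}\to\mathcal{M}$ be the induced map $y\mapsto\sum_{i\ge1}c_iy^i$. Then $f$ is an isomorphism of ultrametric spaces from $\mathcal{M}$ onto $\mathcal{M}$.
   Context: $k((G))$ consists of formal sums $a=\sum_{g\in G}c_gt^g$, $c_g\in k$, with well ordered support $\{g:c_g\ne0\}$; the canonical valuation is $va=\min\operatorname{supp}(a)$, $v0=\infty$, and $\mathcal{M}=\{a: va>0\}$. For $y\in\mathcal{M}$ the series $\sum_i c_iy^i$ converges to a well-defined element of $\mathcal{M}$. $\mathcal{M}$ is an ultrametric space with $u(a,b)=v(a-b)$. A map $g$ between ultrametric spaces is an isomorphism of ultrametric spaces if it is bijective and there is a strictly increasing map $\varphi$ between the value sets with $u'(gy,gz)=\varphi(u(y,z))$ for all $y\neq z$. *)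

(* Defs.v *)
From HB Require Import structures.
From mathcomp Require Import all_boot all_order all_algebra.
From mathcomp Require Import boolp classical_sets functions fsbigop.
Set Implicit Arguments. Unset Strict Implicit. Unset Printing Implicit Defensive.
Import Order.TTheory GRing.Theory Num.Theory.
Local Open Scope classical_set_scope.
Local Open Scope ring_scope.

Record ordered_abelian_group (G : zmodType) (le : G -> G -> Prop) : Prop := {
  oag_refl  : forall x, le x x;
  oag_anti  : forall x y, le x y -> le y x -> x = y;
  oag_trans : forall x y z, le x y -> le y z -> le x z;
  oag_total : forall x y, le x y \/ le y x;
  oag_add   : forall x y z, le x y -> le (x + z) (y + z) }.

Definition ltG (G : zmodType) (le : G -> G -> Prop) (x y : G) : Prop :=
  le x y /\ x <> y.

Section Hahn.
Variables (k : fieldType) (G : zmodType) (le : G -> G -> Prop).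

(* support of a formal sum a = sum_g a(g) t^g *)
Definition supp (a : G -> k) : set G := [set g | a g != 0].

Definition well_ordered (A : set G) : Prop :=
  forall B, B `<=` A -> B !=set0 -> exists2 m, B m & forall b, B b -> le m b.

Definition hahn : set (G -> k) := [set a | well_ordered (supp a)].

Definition hsub (a b : G -> k) : G -> k := fun g => a g - b g.

(* Cauchy product (the sum is finite for Hahn series) *)
Definition hmul (a b : G -> k) : G -> k :=
  fun g => \sum_(h \in [set: G]) (a h * b (g - h)).

Definition hone : G -> k := fun g => if g == 0 then 1 else 0.

Fixpoint hpow (a : G -> k) (n : nat) : G -> k :=
  match n with 0 => hone | n'.+1 => hmul a (hpow a n') end.

Definition is_val (a : G -> k) (g : G) : Prop :=
  a g != 0 /\ forall h, a h != 0 -> le g h.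
Definition hval (a : G -> k) : G := xget 0 (is_val a).

(* valuation ideal M = {a : v a > 0} (v 0 = oo > 0) *)
Definition valM : set (G -> k) :=
  [set a | hahn a /\ forall g, a g != 0 -> ltG le 0 g].

(* y |-> sum_{i>=1} c_i y^i  (the sum is finite coefficientwise for y in M) *)
Definition psmap (c : nat -> k) (y : G -> k) : G -> k :=
  fun g => \sum_(i \in [set i : nat | (1 <= i)%N]) (c i * hpow y i g).

Definition valueset : set G :=
  [set s | exists y z, [/\ valM y, valM z, y <> z & s = hval (hsub y z)]].

Definition ultrametric_iso (f : (G -> k) -> (G -> k)) : Prop :=
  set_bij valM valM f /\
  exists phi : G -> G,
    [/\ phi @` valueset `<=` valueset,
        (forall s t, valueset s -> valueset t -> ltG le s t -> ltG le (phi s) (phi t))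
      & forall y z, valM y -> valM z -> y <> z ->
          hval (hsub (f y) (f z)) = phi (hval (hsub y z))].
End Hahn.

(* Main.v *)
Require Import Defs.
From HB Require Import structures.
From mathcomp Require Import all_boot all_order all_algebra.
From mathcomp Require Import boolp classical_sets functions cardinality fsbigop.
Set Implicit Arguments. Unset Strict Implicit. Unset Printing Implicit Defensive.
Import Order.TTheory GRing.Theory Num.Theory.
Local Open Scope classical_set_scope.
Local Open Scope ring_scope.

Section Ord.
Variables (G : zmodType) (le : G -> G -> Prop).
Hypothesis HG : ordered_abelian_group le.
Local Notation lt := (ltG le).

Lemma leR x : le x x. Proof. by case: HG => r a t o d; eauto. Qed.
Lemma leT x y z : le x y -> le y z -> le x z. Proof. by case: HG => r a t o d; eauto. Qed.
Lemma leA x y : le x y -> le y x -> x = y. Proof. by case: HG => r a t o d; eauto. Qed.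
Lemma leTot x y : le x y \/ le y x. Proof. by case: HG => r a t o d; eauto. Qed.
Lemma leD x y z : le x y -> le (x + z) (y + z). Proof. by case: HG => r a t o d; eauto. Qed.
Lemma leDl x y z : le x y -> le (z + x) (z + y).
Proof. by rewrite ![z + _]addrC; apply: leD. Qed.
Lemma leDK x y z : le (x + z) (y + z) -> le x y.
Proof. by move=> /(leD (- z)); rewrite !addrK. Qed.
Lemma ltNle x y : lt x y -> ~ le y x.
Proof. by move=> [xy nxy] yx; apply: nxy; apply: leA. Qed.
Lemma nleLt x y : ~ le x y -> lt y x.
Proof.
move=> nxy; case: (leTot x y) => // yx; split => // e; apply: nxy; rewrite e; exact: leR.
Qed.
Lemma ltW x y : lt x y -> le x y. Proof. by case. Qed.
Lemma ltLeT x y z : lt x y -> le y z -> lt x z.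
Proof.
move=> [xy nxy] yz; split; first exact: leT yz.
by move=> e; subst z; apply: nxy; apply: leA.
Qed.
Lemma leLtT x y z : le x y -> lt y z -> lt x z.
Proof.
move=> xy [yz nyz]; split; first exact: leT yz.
by move=> e; subst z; apply: nyz; apply: leA.
Qed.
Lemma ltT x y z : lt x y -> lt y z -> lt x z.
Proof. by move=> xy /ltW; apply: ltLeT. Qed.
Lemma ltirr x : ~ lt x x. Proof. by case. Qed.
Lemma ltD x y z : lt x y -> lt (x + z) (y + z).
Proof. by move=> [xy nxy]; split; [exact: leD|move/addIr]. Qed.
Lemma ltDl x y z : lt x y -> lt (z + x) (z + y).
Proof. by rewrite ![z + _]addrC; apply: ltD. Qed.
Lemma ltDK x y z : lt (x + z) (y + z) -> lt x y.
Proof. by move=> /(ltD (- z)); rewrite !addrK. Qed.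
Lemma ltDKl x y z : lt (z + x) (z + y) -> lt x y.
Proof. by rewrite ![z + _]addrC; apply: ltDK. Qed.
Lemma pos_ltD a b : lt 0 a -> lt b (a + b).
Proof. by move=> /(ltD b); rewrite add0r. Qed.
Lemma pos_ltDr a b : lt 0 a -> lt b (b + a).
Proof. by rewrite addrC; apply: pos_ltD. Qed.
Lemma nneg_leD a b : le 0 a -> le b (a + b).
Proof. by move=> /(leD b); rewrite add0r. Qed.
Lemma posD a b : lt 0 a -> lt 0 b -> lt 0 (a + b).
Proof. by move=> a0 b0; apply: ltT a0 _; apply: pos_ltDr. Qed.
Lemma lt_trichotomy x y : lt x y \/ x = y \/ lt y x.
Proof.
case: (pselect (x = y)) => [->|nxy]; first by right; left.
by case: (leTot x y) => h; [left|right; right]; split => // e; apply: nxy.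
Qed.
End Ord.

Lemma nat_min (P : nat -> Prop) : (exists n, P n) -> exists n, P n /\ forall m, P m -> (n <= m)%N.
Proof.
move=> ex; have exb : exists n, `[< P n >] by case: ex => n Pn; exists n; apply/asboolP.
case: (ex_minnP exb) => n /asboolP Pn min; exists n; split => // m Pm.
by apply: min; apply/asboolP.
Qed.

Section Seq.
Variables (G : zmodType) (le : G -> G -> Prop).
Hypothesis HG : ordered_abelian_group le.
Local Notation lt := (ltG le).

Lemma subseq_nondecr (A : set G) : well_ordered le A -> forall a : nat -> G,
  (forall n, A (a n)) -> exists phi : nat -> nat,
   (forall i, (phi i < phi i.+1)%N) /\ (forall i, le (a (phi i)) (a (phi i.+1))).
Proof.
move=> WO a Aa.
have hm : forall n, exists j, (n <= j)%N /\ forall j', (n <= j')%N -> le (a j) (a j').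
  move=> n.
  have sub : [set a j | j in [set j | (n <= j)%N]] `<=` A by move=> _ [j _ <-]; exact: Aa.
  have ne : [set a j | j in [set j | (n <= j)%N]] !=set0 by exists (a n), n => //=.
  have [m [j' nj' e] mmin] := WO _ sub ne; rewrite -e in mmin.
  by exists j'; split => // j'' h; apply: mmin; exists j''.
have [mf hmf] := choice hm.
pose st := fix st i := if i is i'.+1 then (mf (st i')).+1 else 0%N.
exists (fun i => mf (st i)); split => i.
  by rewrite /=; apply: leq_trans (hmf _).1; apply: leqnn.
apply: (hmf (st i)).2 => /=; apply: leq_trans (hmf _).1.
by apply: leq_trans (hmf _).1 _.
Qed.
End Seq.

Section Neumann.
Variables (G : zmodType) (le : G -> G -> Prop).
Hypothesis HG : ordered_abelian_group le.
Local Notation lt := (ltG le).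
Variable S : set G.
Hypothesis WO : well_ordered le S.
Hypothesis Spos : forall s, S s -> lt 0 s.

Inductive Tn : nat -> G -> Prop :=
| Tn1 s : S s -> Tn 1 s
| TnS n s t : S s -> Tn n t -> Tn n.+1 (s + t).

Lemma Tn_pos n g : Tn n g -> lt 0 g.
Proof. by elim => [s /Spos //|m s t /Spos s0 _ t0]; apply: posD. Qed.

Lemma Tn_ge1 n g : Tn n g -> (0 < n)%N.
Proof. by case. Qed.

Lemma Tn_inv n g : Tn n g -> exists a r, [/\ S a, g = a + r &
   ((n = 1%N /\ r = 0) \/ Tn n.-1 r)].
Proof.
case => [s Ss|m s t Ss Tt]; first by exists s, 0; rewrite addr0; split => //; left.
by exists s, t; split => //; right.
Qed.

Definition stepP (t : G) (L : nat) (t' : G) (L' : nat) :=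
  le t' t /\ (lt t' t \/ (L < L')%N).

Lemma stepP_trans t L t' L' t'' L'' : stepP t L t' L' -> stepP t' L' t'' L'' ->
  stepP t L t'' L''.
Proof.
move=> [l1 h1] [l2 h2]; split; first exact (leT HG l2 l1).
case: h1 => [h1|h1]; first by left; eapply (leLtT HG l2 h1).
case: h2 => [h2|h2]; first by left; eapply (ltLeT HG h2 l1).
by right; apply: ltn_trans h2.
Qed.

Definition bad (tt : nat -> G) (LL : nat -> nat) :=
  forall n, Tn (LL n) (tt n) /\ stepP (tt n) (LL n) (tt n.+1) (LL n.+1).

Lemma bad_far tt LL : bad tt LL -> forall m d,
  stepP (tt m) (LL m) (tt (m + d.+1)%N) (LL (m + d.+1)%N).
Proof.
move=> b m; elim => [|d IH]; first by rewrite addn1; exact: (b m).2.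
apply: stepP_trans IH _; have := (b (m + d.+1)%N).2; by rewrite -addnS.
Qed.

Definition D t L := exists tt LL, [/\ tt 0%N = t, LL 0%N = L & bad tt LL].

Lemma D_shift t L : D t L -> exists t' L', stepP t L t' L' /\ D t' L'.
Proof.
move=> [tt [LL [<- <- b]]]; exists (tt 1%N), (LL 1%N); split; first exact: (b 0%N).2.
by exists (fun n => tt n.+1), (fun n => LL n.+1); split => // n; apply: b.
Qed.

Lemma D_Tn t L : D t L -> Tn L t.
Proof. by move=> [tt [LL [<- <- b]]]; apply: (b 0%N).1. Qed.

Theorem nobad tt LL : ~ bad tt LL.
Proof.
move=> b0.
pose C t L t' L' := stepP t L t' L' /\ D t' L'.
have minC : forall x : G * nat, exists y : G * nat, D x.1 x.2 ->
   C x.1 x.2 y.1 y.2 /\ forall t'' L'', C x.1 x.2 t'' L'' -> (y.2 <= L'')%N.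
  move=> [t L]; case: (pselect (D t L)) => Dx; last by exists (t, L).
  have ex : exists L', exists t', C t L t' L'.
    by case: (D_shift Dx) => t' [L' h]; exists L', t'.
  have [L' [[t' Ct'] mn]] := nat_min ex.
  exists (t', L') => _; split => // t'' L'' C''; apply: mn; by exists t''.
have [f hf] := choice minC.
pose p := fix p n := if n is n'.+1 then f (p n') else (tt 0%N, LL 0%N).
have Dp : forall n, D (p n).1 (p n).2.
  elim => [|n IH]; first by exists tt, LL.
  by have [[_ +] _] := hf _ IH.
have bp : bad (fun n => (p n).1) (fun n => (p n).2).
  move=> n; split; first exact: D_Tn.
  by have [[+ _] _] := hf _ (Dp n).
have arx : forall n, exists ar : G * G, [/\ S ar.1, (p n).1 = ar.1 + ar.2 &
   (((p n).2 = 1%N /\ ar.2 = 0) \/ Tn (p n).2.-1 ar.2)].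
  move=> n; have [a [r [H1 H2 H3]]] := Tn_inv (D_Tn (Dp n)); by exists (a, r).
have [ar har] := choice arx.
have [phi [phiI phiM]] := subseq_nondecr (a := fun j => (ar j.+1).1) WO
   (fun j => let: And3 h _ _ := har j.+1 in h).
pose u j := (ar (phi j).+1).2.
pose L j := ((p (phi j).+1).2).-1.
have farP : forall j, stepP (p (phi j).+1).1 (p (phi j).+1).2
                            (p (phi j.+1).+1).1 (p (phi j.+1).+1).2.
  move=> j; have := bad_far bp (phi j).+1 ((phi j.+1) - (phi j).+1)%N.
  by rewrite addnS subnKC.
have ustep : forall j, le (u j.+1) (u j) /\ (lt (u j.+1) (u j) \/ (L j < L j.+1)%N).
  move=> j; have [le1 h1] := farP j.
  have [_ e1 _] := har (phi j).+1; have [_ e2 _] := har (phi j.+1).+1.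
  have aa := phiM j.
  have key : le (u j.+1 + (ar (phi j.+1).+1).1) (u j + (ar (phi j.+1).+1).1).
    rewrite addrC -e2; eapply (leT HG le1); rewrite e1 addrC; exact (leDl HG _ aa).
  split; first exact (leDK HG key).
  case: h1 => [h1|h1].
    have h2 : lt (u j.+1 + (ar (phi j.+1).+1).1) (u j + (ar (phi j.+1).+1).1).
      rewrite addrC -e2; eapply (ltLeT HG h1); rewrite e1 addrC; exact (leDl HG _ aa).
    left; exact (ltDK HG h2).
  right; rewrite /L; have := Tn_ge1 (D_Tn (Dp (phi j).+1)).
  by case: ((p (phi j).+1).2) h1 => // l; case: ((p (phi j.+1).+1).2).
have uT : forall j, Tn (L j) (u j).
  move=> j; have [_ _ [[L1 u0]|//]] := har (phi j).+1.
  exfalso; have [ule ust] := ustep j.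
  have [_ _ [[L1' u0']|Tu']] := har (phi j.+1).+1.
    case: ust => [|]; first by rewrite /u u0 u0'; apply: ltirr.
    by rewrite /L L1 L1'.
  eapply (ltNle HG (Tn_pos Tu')); by rewrite /u -u0.
have Du : D (u 0%N) (L 0%N).
  exists u, L; split => // j; split; first exact: uT.
  exact: ustep.
set m := phi 0%N in u L Du uT ustep farP.
have [_ mn] := hf _ (Dp m).
have Cu : C (p m).1 (p m).2 (u 0%N) (L 0%N).
  split => //; have [_ st] := (bp m).
  have [Sa e1 _] := har m.+1.
  have lu : lt (u 0%N) (p m.+1).1 by rewrite e1 /u -/m; eapply (pos_ltD HG ); apply: Spos.
  suff h : lt (u 0%N) (p m).1 by split; [apply: ltW|left].
  case: st => l1 _; exact (ltLeT HG lu l1).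
have := mn _ _ Cu; rewrite /L -/m /=.
have := Tn_ge1 (D_Tn (Dp m.+1)); rewrite /=.
by case: (f (p m)).2 => // l; rewrite ltnn.
Qed.

Definition Tset : set G := [set g | exists n, Tn n g].

Lemma Tset_pos g : Tset g -> lt 0 g.
Proof. by case=> n /Tn_pos. Qed.

Theorem Tset_WO : well_ordered le Tset.
Proof.
move=> B BT [b0 Bb0]; apply: contrapT => nomin.
have nxt : forall x, exists y, B x -> B y /\ lt y x.
  move=> x; case: (pselect (B x)) => Bx; last by exists x.
  have : ~ forall b, B b -> le x b by move=> h; apply: nomin; exists x.
  move=> /existsNP [y /not_implyP [By nxy]]; exists y => _; split => //.
  exact (nleLt HG nxy).
have [nx hnx] := choice nxt.
pose tt n := iter n nx b0.
have Btt : forall n, B (tt n) by elim => // n IH; rewrite /tt /=; apply: (hnx _ IH).1.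
have Lx : forall n, exists L, Tn L (tt n) by move=> n; case: (BT _ (Btt n)) => L h; exists L.
have [LL hLL] := choice Lx.
apply: (@nobad tt LL) => n; split => //; split; first exact: ltW (hnx _ (Btt n)).2.
by left; apply: (hnx _ (Btt n)).2.
Qed.

Theorem Tn_bounded g : exists N, forall n, Tn n g -> (n <= N)%N.
Proof.
apply: contrapT => /forallNP nb.
have nxt : forall N, exists n, (N < n)%N /\ Tn n g.
  move=> N; have /existsNP [n /not_implyP [Tg nle]] := nb N.
  by exists n; split => //; rewrite ltnNge; apply/negP.
have [nx hnx] := choice nxt.
pose LL := fix LL i := if i is i'.+1 then nx (LL i') else nx 0%N.
apply: (@nobad (fun => g) LL) => n; split.
  by case: n => [|n]; apply: (hnx _).2.
by split; [exact (leR HG _)|right; apply: (hnx _).1].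
Qed.

Lemma Tn_add n m t u : Tn n t -> Tn m u -> Tn (n + m) (t + u).
Proof.
elim => [s Ss|n' s t' Ss _ IH] Tu.
  by rewrite add1n; apply: TnS.
by rewrite addSn -addrA; apply: TnS => //; apply: IH.
Qed.

End Neumann.

Section Hahn2.
Variables (k : fieldType) (G : zmodType) (le : G -> G -> Prop).
Hypothesis HG : ordered_abelian_group le.
Local Notation lt := (ltG le).

Lemma fsum_neq0 (T : choiceType) (A : set T) (F : T -> k) :
  \sum_(i \in A) F i != 0 -> exists i, A i /\ F i != 0.
Proof.
move=> nz; apply: contrapT => h; move/eqP: nz; apply; apply: fsbig1 => i Ai.
by apply/eqP; apply: contrapT => nF; apply: h; exists i; split => //; apply/negP.
Qed.

Lemma hmul_neq0 (a b : G -> k) g : hmul a b g != 0 ->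
  exists h, a h != 0 /\ b (g - h) != 0.
Proof.
move=> /fsum_neq0 [h [_]]; rewrite mulf_eq0 negb_or => /andP[? ?].
by exists h.
Qed.

Lemma hmul_one (a : G -> k) g : hmul a (@hone k G) g = a g.
Proof.
rewrite /hmul -(fsbig_widen [set g]) //; first by rewrite fsbig_set1 subrr /hone eqxx mulr1.
move=> h [_ /= ngh]; rewrite /hone ifF ?mulr0 //; apply/eqP => /eqP.
by rewrite subr_eq0 => /eqP e; apply: ngh.
Qed.

Lemma hpow1 (a : G -> k) : hpow a 1 = a.
Proof. by apply/funext => g; rewrite /= hmul_one. Qed.

Definition pos_supp (y : G -> k) := forall h, y h != 0 -> lt 0 h.

Lemma supp_hpow (y : G -> k) i g : hpow y i.+1 g != 0 -> Tn (supp y) i.+1 g.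
Proof.
elim: i g => [|i IH] g.
  by rewrite hpow1 => yg; apply: Tn1.
move=> /hmul_neq0 [h [yh /IH Th]].
by rewrite -(subrK h g) addrC; apply: TnS.
Qed.

Lemma hpow_pos (y : G -> k) i g : pos_supp y -> hpow y i.+1 g != 0 -> lt 0 g.
Proof. by move=> py /supp_hpow; apply: (Tn_pos HG) => s; apply: py. Qed.

Lemma agree (y y' : G -> k) (m : G) : pos_supp y -> pos_supp y' ->
  (forall h, lt h m -> y h = y' h) ->
  forall i g, lt g m -> hpow y i.+1 g = hpow y' i.+1 g.
Proof.
move=> py py' ag.
have Q : forall i, (forall g, lt g m -> hpow y i.+1 g = hpow y' i.+1 g) ->
     forall g, le g m -> hpow y i.+2 g = hpow y' i.+2 g.
  move=> i P g gm; change (hmul y (hpow y i.+1) g = hmul y' (hpow y' i.+1) g).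
  rewrite /hmul; apply: eq_fsbigr => h _.
  case: (pselect (lt 0 h)) => h0; last first.
    have -> : y h = 0 by case: (eqVneq (y h) 0) => // /py.
    have -> : y' h = 0 by case: (eqVneq (y' h) 0) => // /py'.
    by rewrite !mul0r.
  have ghm : lt (g - h) m.
    apply: (ltLeT HG _ gm); rewrite -{2}(subrK h g); exact: (pos_ltDr HG _ h0).
  rewrite (P _ ghm); case: (eqVneq (hpow y' i.+1 (g - h)) 0) => [->|nz].
    by rewrite !mulr0.
  have : lt 0 (g - h) by apply: (hpow_pos py'); exact: nz.
  move=> /(ltD HG h); rewrite add0r subrK => hg.
  by rewrite ag //; apply: (ltLeT HG hg gm).
elim => [|i IH] g gm; first by rewrite !hpow1; apply: ag.
by apply: Q => //; apply: ltW.
Qed.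

Lemma agree2 (y y' : G -> k) (m : G) : pos_supp y -> pos_supp y' ->
  (forall h, lt h m -> y h = y' h) ->
  forall i, hpow y i.+2 m = hpow y' i.+2 m.
Proof.
move=> py py' ag i; change (hmul y (hpow y i.+1) m = hmul y' (hpow y' i.+1) m).
rewrite /hmul; apply: eq_fsbigr => h _.
case: (pselect (lt 0 h)) => h0; last first.
  have -> : y h = 0 by case: (eqVneq (y h) 0) => // /py.
  have -> : y' h = 0 by case: (eqVneq (y' h) 0) => // /py'.
  by rewrite !mul0r.
have ghm : lt (m - h) m.
  rewrite -{2}(subrK h m); exact: (pos_ltDr HG _ h0).
rewrite (agree py py' ag i ghm); case: (eqVneq (hpow y' i.+1 (m - h)) 0) => [->|nz].
  by rewrite !mulr0.
have : lt 0 (m - h) by apply: (hpow_pos py'); exact: nz.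
move=> /(ltD HG h); rewrite add0r subrK => hg.
by rewrite ag.
Qed.

End Hahn2.

Section Main.
Variables (k : fieldType) (G : zmodType) (le : G -> G -> Prop).
Hypothesis HG : ordered_abelian_group le.
Local Notation lt := (ltG le).
Variable c : nat -> k.
Hypothesis hc1 : c 1%N != 0.

Lemma WO_sub (A B : set G) : A `<=` B -> well_ordered le B -> well_ordered le A.
Proof. by move=> AB WB C CA; apply: WB; apply: subset_trans AB. Qed.

Lemma WO_union (A B : set G) : well_ordered le A -> well_ordered le B ->
  well_ordered le (A `|` B).
Proof.
move=> WA WB C CAB [c0 Cc0].
case: (pselect ((C `&` A) !=set0)) => [nA|eA]; last first.
  apply: WB => [x Cx|]; last by exists c0.
  case: (CAB _ Cx) => // Ax; exfalso; apply: eA; by exists x.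
case: (pselect ((C `&` B) !=set0)) => [nB|eB]; last first.
  have [ma [Cma _] mina] := WA _ (@subIsetr _ C A) nA.
  exists ma => // b Cb; apply: mina; split => //.
  case: (CAB _ Cb) => // Bb; exfalso; apply: eB; by exists b.
have [ma [Cma _] mina] := WA _ (@subIsetr _ C A) nA.
have [mb [Cmb _] minb] := WB _ (@subIsetr _ C B) nB.
case: (leTot HG ma mb) => h.
  exists ma => // b Cb; case: (CAB _ Cb) => Ab; first by apply: mina.
  by apply: (leT HG h); apply: minb.
exists mb => // b Cb; case: (CAB _ Cb) => Ab; last by apply: minb.
by apply: (leT HG h); apply: mina.
Qed.

Lemma valM_WO (y : G -> k) : Defs.valM le y -> well_ordered le (supp y).
Proof. by case. Qed.
Lemma valM_pos (y : G -> k) : Defs.valM le y -> pos_supp le y.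
Proof. by case. Qed.

Lemma hpow_fin (y : G -> k) : well_ordered le (supp y) -> pos_supp le y ->
  forall g, exists N, forall i, (N < i)%N -> hpow y i g = 0.
Proof.
move=> W P g; have [N hN] := Tn_bounded HG W P g.
exists N => -[|i] // Ni; apply/eqP; apply: contraT => /supp_hpow /hN.
by rewrite leqNgt Ni.
Qed.

Lemma split1 (F : nat -> k) N : (forall i, (N < i)%N -> F i = 0) ->
  \sum_(i \in [set i | (1 <= i)%N]) F i =
  F 1%N + \sum_(i \in [set i | (2 <= i)%N]) F i.
Proof.
move=> FN.
have e : forall m, (0 < m)%N -> (m <= N.+2)%N ->
   \sum_(i \in [set i | (m <= i)%N]) F i = \sum_(m <= i < N.+3) F i.
  move=> m m0 mN.
  rewrite -(fsbig_widen [set i | (m <= i <= N.+2)%N] [set i | (m <= i)%N] F).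
  - rewrite (fsbig_fwiden (index_iota m N.+3)) //.
    + by move=> i /= h; rewrite mem_index_iota ltnS.
    + exact: iota_uniq.
    + by move=> i [/= ]; rewrite mem_index_iota ltnS.
  - by move=> i /= /andP[].
  - move=> i [/= mi] /negP; rewrite mi /= -ltnNge => h; apply: FN.
    by apply: ltn_trans h; apply: ltn_trans (ltnSn _); apply: ltnSn.
rewrite !e //.
by rewrite big_ltn.
Qed.

Lemma psmap_expand (y : G -> k) : Defs.valM le y -> forall g,
  psmap c y g = c 1%N * y g + \sum_(i \in [set i | (2 <= i)%N]) c i * hpow y i g.
Proof.
move=> vy g; have [N hN] := hpow_fin (valM_WO vy) (valM_pos vy) g.
rewrite /psmap (@split1 _ N) ?hpow1 // => i /hN ->; by rewrite mulr0.
Qed.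

Lemma psmap_supp (y : G -> k) g : psmap c y g != 0 -> Tset (supp y) g.
Proof.
move=> /fsum_neq0 [[|i] [//= _]]; rewrite mulf_eq0 negb_or => /andP[_].
by move=> /supp_hpow h; exists i.+1.
Qed.

Lemma psmap_valM (y : G -> k) : Defs.valM le y -> Defs.valM le (psmap c y).
Proof.
move=> vy; split.
  apply: (WO_sub (B := Tset (supp y))); first by move=> g /psmap_supp.
  exact (Tset_WO HG (valM_WO vy) (valM_pos vy)).
by move=> g /psmap_supp; apply: (Tset_pos HG (valM_pos vy)).
Qed.

Lemma is_val_uniq (a : G -> k) m : is_val le a m -> hval le a = m.
Proof.
move=> vm; apply: xget_unique => // m' [nz' min'].
by apply: (leA HG); [apply: min' ; case: vm|apply: vm.2].
Qed.

Lemma val_main (y z : G -> k) : Defs.valM le y -> Defs.valM le z -> y <> z ->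
  exists m, [/\ hval le (hsub y z) = m, hval le (hsub (psmap c y) (psmap c z)) = m
     & hsub (psmap c y) (psmap c z) m != 0].
Proof.
move=> vy vz nyz.
have W : well_ordered le (supp (hsub y z)).
  apply: (WO_sub (B := supp y `|` supp z)); last by apply: WO_union; apply: valM_WO.
  move=> g; rewrite /supp /hsub /= => h.
  case: (eqVneq (y g) 0) => [yg|]; last by left.
  right; by move: h; rewrite yg sub0r oppr_eq0.
have ne : supp (hsub y z) !=set0.
  apply: contrapT => ne; apply: nyz; apply/funext => g; apply/eqP.
  rewrite -subr_eq0; apply: contrapT => /negP nz; apply: ne; by exists g.
have [m wm minm] := W _ (@subset_refl _ _) ne.
have ag : forall h, lt h m -> y h = z h.
  move=> h hm; apply/eqP; rewrite -subr_eq0; apply: contrapT => /negP nz.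
  exact: (ltNle HG hm (minm _ nz)).
have ag' : forall g, lt g m -> psmap c y g = psmap c z g.
  move=> g gm; apply: eq_fsbigr => -[|i] //= _; congr (_ * _).
  exact (agree HG (valM_pos vy) (valM_pos vz) ag i gm).
have nzm : hsub (psmap c y) (psmap c z) m != 0.
  rewrite /hsub !psmap_expand // opprD addrACA.
  have -> : \sum_(i \in [set i | (2 <= i)%N]) c i * hpow y i m =
            \sum_(i \in [set i | (2 <= i)%N]) c i * hpow z i m.
    apply: eq_fsbigr => -[|[|i]]; rewrite inE //= => _; congr (_ * _).
    exact (agree2 HG (valM_pos vy) (valM_pos vz) ag i).
  by rewrite subrr addr0 -mulrBr mulf_neq0.
exists m; split => //.
  by apply: is_val_uniq; split.
apply: is_val_uniq; split => // h nzh; apply: contrapT => nmh.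
move: nzh; rewrite /hsub ag' ?subrr ?eqxx //; exact (nleLt HG nmh).
Qed.

End Main.

Section Surj.
Variables (k : fieldType) (G : zmodType) (le : G -> G -> Prop).
Hypothesis HG : ordered_abelian_group le.
Local Notation lt := (ltG le).
Variable c : nat -> k.
Hypothesis hc1 : c 1%N != 0.
Variable z : G -> k.
Hypothesis Hz : Defs.valM le z.

Local Notation T := (Tset (supp z)).

Lemma WOT : well_ordered le T.
Proof. exact (Tset_WO HG (valM_WO Hz) (valM_pos Hz)). Qed.

Definition R (h g : G) := T h /\ lt h g.

Lemma R_wf : well_founded R.
Proof.
move=> g; apply: contrapT => nA.
have ex : [set h | T h /\ ~ Acc R h] !=set0.
  apply: contrapT => nex; apply: nA; constructor => h [Th _].
  apply: contrapT => nAh; apply: nex; by exists h.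
have [m [Tm nAm] minm] := WOT (fun h (p : T h /\ ~ Acc R h) => proj1 p) ex.
apply: nAm; constructor => h [Th hm]; apply: contrapT => nAh.
exact (ltNle HG hm (minm h (conj Th nAh))).
Qed.

Definition body (g : G) (rec : forall h, R h g -> k) : k :=
  let yh := fun h => match pselect (R h g) with left p => rec h p | right _ => 0 end in
  if pselect (T g) then (z g - \sum_(i \in [set i | (2 <= i)%N]) c i * hpow yh i g) / c 1%N
  else 0.

Definition ysol : G -> k := Fix R_wf (fun _ => k) body.

Definition yhat g h : k := match pselect (R h g) with left _ => ysol h | right _ => 0 end.

Lemma ysol_eq g : ysol g = if pselect (T g) then
   (z g - \sum_(i \in [set i | (2 <= i)%N]) c i * hpow (yhat g) i g) / c 1%N else 0.
Proof.
rewrite /ysol Fix_eq; first reflexivity.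
move=> x f1 f2 ext; rewrite /body.
suff -> : (fun h => match pselect (R h x) with left p => f1 h p | right _ => 0 end) =
          (fun h => match pselect (R h x) with left p => f2 h p | right _ => 0 end) by [].
by apply/funext => h; case: pselect.
Qed.

Lemma suppT g : ysol g != 0 -> T g.
Proof. by rewrite ysol_eq; case: (pselect (T g)) => //= _; rewrite eqxx. Qed.

Lemma ysol_pos : pos_supp le ysol.
Proof. by move=> g /suppT; apply: (Tset_pos HG (valM_pos Hz)). Qed.

Lemma yhat_pos g : pos_supp le (yhat g).
Proof. by move=> h; rewrite /yhat; case: pselect; [move=> _; apply: ysol_pos|rewrite eqxx]. Qed.

Lemma yhat_ag g h : lt h g -> yhat g h = ysol h.
Proof.
move=> hg; rewrite /yhat; case: pselect => // nR.
apply/esym/eqP; apply: contraT => /suppT Th; exfalso; exact: nR.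
Qed.

Lemma key g : T g -> c 1%N * ysol g = z g - \sum_(i \in [set i | (2 <= i)%N]) c i * hpow ysol i g.
Proof.
move=> Tg; rewrite ysol_eq; case: (pselect (T g)) => //= _.
have -> : \sum_(i \in [set i | (2 <= i)%N]) c i * hpow (yhat g) i g =
          \sum_(i \in [set i | (2 <= i)%N]) c i * hpow ysol i g.
  apply: eq_fsbigr => -[|[|i]]; rewrite inE //= => _; congr (_ * _).
  exact (agree2 HG (@yhat_pos g) ysol_pos (@yhat_ag g) i).
by rewrite mulrC divfK.
Qed.

Lemma ysol_valM : Defs.valM le ysol.
Proof.
split; last exact: ysol_pos.
by apply: (WO_sub (B := T)); [move=> g /suppT|exact: WOT].
Qed.

Lemma closure n g : Tn (supp ysol) n g -> T g.
Proof.
elim => [s /suppT //|n' s t /suppT [a Ta] _ [b Tb]].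
by exists (a + b)%N; apply: Tn_add.
Qed.

Lemma ysol_sol : psmap c ysol = z.
Proof.
apply/funext => g; rewrite (psmap_expand HG c ysol_valM).
case: (pselect (T g)) => Tg; first by rewrite key // subrK.
have -> : ysol g = 0 by apply/eqP; apply: contraT => /suppT.
rewrite mulr0 add0r fsbig1.
  apply/esym/eqP; apply: contraT => zg; exfalso; apply: Tg; exists 1%N; exact: Tn1.
move=> i Hi; have {Hi} Hi : (2 <= i)%N := Hi; case: i Hi => [|[|i]] // _.
apply/eqP; rewrite mulf_eq0; apply/orP; right; apply: contraT => /supp_hpow /closure.
by move=> /Tg.
Qed.

End Surj.

Theorem theorem32 (k : fieldType) (G : zmodType) (le : G -> G -> Prop)
  (HG : ordered_abelian_group le) (c : nat -> k) (hc1 : c 1%N != 0%R) :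
  ultrametric_iso le (psmap (G:=G) c).
Proof.
split.
  split.
  - by move=> y vy; apply: psmap_valM.
  - move=> y z /[!inE] vy vz e; apply: contrapT => nyz.
    have [m [_ _ nz]] := val_main HG hc1 vy vz nyz.
    by move: nz; rewrite e /hsub subrr eqxx.
  - move=> z vz; exists (ysol HG c vz); first exact: ysol_valM.
    exact: ysol_sol.
exists id; split.
- by move=> _ [s vs <-].
- by [].
- move=> y z vy vz nyz; have [m [h1 h2 _]] := val_main HG hc1 vy vz nyz.
  by rewrite h1 h2.
Qed.
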